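(* Let $k\ge 2$, $n=2^k$, and let $P$ be an isothetic drawing of the Horton set of $n$ points, with tree $T$, first level $T_1$ and slab $R$ as defined in the context. Then no two of the lines defined by the vertices of $T_1$ intersect inside $R$. Consequently, inside $R$ these lines are totally ordered from bottom to top, and this bottom-to-top order coincides with the left-to-right order of the corresponding vertices of $T_1$ in $T$.
   Context: For a finite set $S$ of points in the plane with pairwise distinct $x$-coordinates, list its points in increasing order of $x$-coordinate as $p_0,\dots,p_{|S|-1}$ and set $S_{\mathrm{even}}=\{p_0,p_2,\dots\}$, $S_{\mathrm{odd}}=\{p_1,p_3,\dots\}$. For point sets $X,Y$, $X$ is high above $Y$ if every line through two points of $X$ lies strictly above every point of $Y$ and every line through two points of $Y$ lies strictly below every point of $X$. A Horton set of $2^k$ points is defined recursively: a set $H$ of $2^k$ points, no three collinear, with pairwise distinct $x$-coordinates, such that for $k=0$ it is a single point and for $k\ge1$ both $H_{\mathrm{even}}$ and $H_{\mathrm{odd}}$ are Horton sets of $2^{k-1}$ points and $H_{\mathrm{odd}}$ is high above $H_{\mathrm{even}}$. An isothetic drawing of the Horton set of $n=2^k$ points is a Horton set of $n$ points all of whose points have integer coordinates. Let $P$ be such a set, with points $p_0,\dots,p_{n-1}$ sorted by $x$-coordinate. The tree $T$ is the complete rooted binary tree with root $P$ in which every vertex $Q$ with at least two points has left child $Q_{\mathrm{even}}$ and right child $Q_{\mathrm{odd}}$ (taken with respect to the $x$-order of $Q$). The left-to-right order of vertices of a given level of $T$ is their order in the standard planar drawing of $T$ in which each left child is placed before its sibling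 right child. For $0\le i\le k$, the $i$-th level $T_i$ is the set of vertices of $T$ consisting of exactly $2^i$ points. Each vertex of $T_1$ is a pair of points, and the line through them is called the line defined by that vertex. $R$ is the closed vertical slab bounded by the vertical lines through $p_{n/4}$ and $p_{3n/4-1}$. *)

(* Defs.v *)
From HB Require Import structures.
From mathcomp Require Import all_boot all_order all_algebra.
Set Implicit Arguments. Unset Strict Implicit. Unset Printing Implicit Defensive.
Import Order.TTheory GRing.Theory Num.Theory.

Definition pt := (int * int)%type.
Definition pt0 : pt := (0%R, 0%R).

(* S_even / S_odd for a sequence listed in increasing x-order. *)
Fixpoint evens (s : seq pt) : seq pt :=
  if s is a :: t then a :: odds t else [::]
with odds (s : seq pt) : seq pt :=
  if s is _ :: t then evens t else [::].

Local Open Scope ring_scope.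

Definition line_at {F : numFieldType} (a b : pt) (x : F) : F :=
  a.2%:~R + (b.2 - a.2)%:~R * (x - a.1%:~R) / (b.1 - a.1)%:~R.

Definition collinear (a b c : pt) : bool :=
  (b.1 - a.1) * (c.2 - a.2) == (c.1 - a.1) * (b.2 - a.2).

Definition no_three_collinear (s : seq pt) : bool :=
  [forall i : 'I_(size s), forall j : 'I_(size s), forall l : 'I_(size s),
     [&& i != j, j != l & i != l] ==>
     ~~ collinear (nth pt0 s i) (nth pt0 s j) (nth pt0 s l)].

Definition high_above (X Y : seq pt) : bool :=
  all (fun a => all (fun b => (a.1 < b.1) ==>
        all (fun y => (y.2%:~R : rat) < line_at a b (y.1%:~R : rat)) Y) X) X
  && all (fun a => all (fun b => (a.1 < b.1) ==>
        all (fun x => line_at a b (x.1%:~R : rat) < (x.2%:~R : rat)) X) Y) Y.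

Fixpoint horton_rec (k : nat) (s : seq pt) : bool :=
  match k with
  | 0 => size s == 1%N
  | k'.+1 => [&& size s == (2 ^ k'.+1)%N, horton_rec k' (evens s),
                horton_rec k' (odds s) & high_above (odds s) (evens s)]
  end.

(* P (listed as p_0, ..., p_{n-1} in strictly increasing x-order; hence
   pairwise distinct x-coordinates) is an isothetic drawing of the Horton set
   of 2^k points. *)
Definition isothetic_horton (k : nat) (P : seq pt) : bool :=
  [&& sorted (fun a b : pt => a.1 < b.1) P, no_three_collinear P & horton_rec k P].

(* vertices of level T_{k-i} ... : level i from the root, left-to-right order *)
Fixpoint tree_level (i : nat) (P : seq pt) : seq (seq pt) :=
  match i with
  | 0 => [:: P]
  | i'.+1 => flatten [seq [:: evens q; odds q] | q <- tree_level i' P]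
  end.

Definition pair_line {F : numFieldType} (q : seq pt) (x : F) : F :=
  line_at (nth pt0 q 0) (nth pt0 q 1) x.

Definition in_slab {F : numFieldType} (k : nat) (P : seq pt) (x : F) : bool :=
  ((nth pt0 P (2 ^ k %/ 4)%N).1%:~R <= x)
  && (x <= (nth pt0 P ((3 * 2 ^ k) %/ 4 - 1)%N).1%:~R).

(* Main.v *)
Require Import Defs.
From mathcomp Require Import all_boot all_order all_algebra zify ring lra.
Import Order.TTheory GRing.Theory Num.Theory.
Local Open Scope ring_scope.
Lemma nth_eo (s : seq pt) : forall u : nat,
  nth pt0 (evens s) u = nth pt0 s (2 * u)%N /\ nth pt0 (odds s) u = nth pt0 s (2 * u).+1.
Proof.
elim: s => [|x t IH] u; first by rewrite !nth_nil.
split.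
  case: u => [|u]; first by [].
  have -> : (2 * u.+1 = (2*u).+1.+1)%N by rewrite mulnS.
  by rewrite [LHS]/= (proj2 (IH u)).
by rewrite [LHS]/= (proj1 (IH u)).
Qed.
Lemma size_eo (s : seq pt) : size (evens s) = uphalf (size s) /\ size (odds s) = half (size s).
Proof. by elim: s => [|x t [IH1 IH2]] //=; rewrite IH1 IH2. Qed.
Lemma tl_split j (s : seq pt) : tree_level j.+1 s = tree_level j (evens s) ++ tree_level j (odds s).
Proof.
elim: j s => [|j IH] s //=.
by rewrite -/(tree_level j.+1 s) IH map_cat flatten_cat.
Qed.
Fixpoint rho (j t : nat) : nat :=
  if j is j'.+1 then (if (t < 2^j')%N then 2 * rho j' t else (2 * rho j' (t - 2^j')).+1)%N else 0%N.
Lemma test (E u a : nat) : (2 * (a + 2 * E * u) = 2 * a + 2 * (2 * E) * u)%N.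
Proof. lia. Qed.
Lemma size_even_odd (s : seq pt) N : size s = (2 * N)%N ->
  size (evens s) = N /\ size (odds s) = N.
Proof.
have [-> ->] := size_eo s => ->; rewrite mul2n.
by rewrite uphalf_double half_double.
Qed.

Lemma tl_char j (s : seq pt) : size s = (2 ^ j.+1)%N ->
  size (tree_level j s) = (2 ^ j)%N /\
  forall t, (t < 2 ^ j)%N -> (rho j t < 2 ^ j)%N /\
    nth [::] (tree_level j s) t = [:: nth pt0 s (rho j t); nth pt0 s (rho j t + 2 ^ j)%N].
Proof.
elim: j s => [|j IH] s hs.
  split => // t; rewrite expn0 ltnS leqn0 => /eqP -> /=; split => //.
  by case: s hs => [|x [|y [|z u]]].
have [he ho] := @size_even_odd s (2 ^ j.+1)%N ltac:(by rewrite hs expnS).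
have [sze nte] := IH _ he; have [szo nto] := IH _ ho.
rewrite tl_split size_cat sze szo; split; first by rewrite expnS; lia.
move=> t ht; rewrite nth_cat sze /=.
case: ifP => htj.
  have [h1 ->] := nte _ htj; split; first by rewrite expnS; lia.
  rewrite !(proj1 (nth_eo _ _)); congr [:: _; nth _ _ _].
  by rewrite expnS; lia.
have ht' : (t - 2 ^ j < 2 ^ j)%N by move: ht; rewrite expnS; lia.
have [h1 ->] := nto _ ht'; split; first by rewrite expnS; lia.
rewrite !(proj2 (nth_eo _ _)); congr [:: _; nth _ _ _].
by rewrite expnS; lia.
Qed.

Lemma rho_ord j i i' : (i < i')%N -> (i' < 2 ^ j)%N ->
  exists m a u u', [/\ (m < j)%N, (a < 2 ^ m)%N, rho j i = (a + 2 ^ m.+1 * u)%N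
    & rho j i' = (a + 2 ^ m + 2 ^ m.+1 * u')%N].
Proof.
elim: j i i' => [|j IH] i i'; first by rewrite expn0; lia.
move=> hii' hi'; rewrite /=.
case: ifP => h1; case: ifP => h2.
- have [m [a [u [u' [hm ha e1 e2]]]]] := IH i i' hii' h2.
  exists m.+1, (2 * a)%N, u, u'; rewrite e1 e2; split => //; rewrite ?expnS; lia.
- exists 0%N, 0%N, (rho j i), (rho j (i' - 2 ^ j)); split => //; lia.
- lia.
- have [m [a [u [u' [hm ha e1 e2]]]]] := IH (i - 2 ^ j)%N (i' - 2 ^ j)%N
     ltac:(lia) ltac:(move: hi'; rewrite expnS; lia).
  exists m.+1, (2 * a).+1, u, u'; rewrite e1 e2; split => //; rewrite ?expnS; lia.
Qed.
Definition abv (a b z : pt) : bool := ((b.2-a.2)*(z.1-a.1) < (z.2-a.2)*(b.1-a.1)).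
Definition blw (a b z : pt) : bool := ((z.2-a.2)*(b.1-a.1) < (b.2-a.2)*(z.1-a.1)).

Lemma line_eq (F : realFieldType) (a b z : pt) : a.1 < b.1 ->
  line_at a b (z.1%:~R : F) = a.2%:~R + ((b.2-a.2)*(z.1-a.1))%:~R / (b.1 - a.1)%:~R.
Proof. by move=> _; rewrite /line_at intrM !intrB. Qed.

Lemma line_lt (F : realFieldType) (a b z : pt) : a.1 < b.1 ->
  (line_at a b (z.1%:~R : F) < z.2%:~R) = abv a b z.
Proof.
move=> hab; rewrite line_eq // -ltrBrDl -intrB.
have hd : (0 : F) < (b.1 - a.1)%:~R by rewrite ltr0z subr_gt0.
by rewrite ltr_pdivrMr // -intrM ltr_int.
Qed.

Lemma line_gt (F : realFieldType) (a b z : pt) : a.1 < b.1 ->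
  (z.2%:~R < line_at a b (z.1%:~R : F)) = blw a b z.
Proof.
move=> hab; rewrite line_eq // -ltrBlDl -intrB.
have hd : (0 : F) < (b.1 - a.1)%:~R by rewrite ltr0z subr_gt0.
by rewrite ltr_pdivlMr // -intrM ltr_int.
Qed.

Lemma line_through1 (F : realFieldType) (a b : pt) :
  line_at a b (a.1%:~R : F) = a.2%:~R.
Proof. by rewrite /line_at subrr mulr0 mul0r addr0. Qed.

Lemma line_through2 (F : realFieldType) (a b : pt) : a.1 < b.1 ->
  line_at a b (b.1%:~R : F) = b.2%:~R.
Proof.
move=> hab; have hd : ((b.1 - a.1)%:~R : F) != 0 by rewrite intr_eq0 subr_eq0 gt_eqF.
rewrite /line_at -intrB -mulrA mulfV // mulr1 intrB; ring.
Qed.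

Lemma line_aff (F : realFieldType) (a b : pt) (x y : F) :
  line_at a b x - line_at a b y = ((b.2-a.2)%:~R / (b.1-a.1)%:~R) * (x - y).
Proof. rewrite /line_at; ring. Qed.
Local Close Scope ring_scope.
Lemma hcls K (s : seq pt) : horton_rec K s ->
  (forall m a u1 u2 w, (m < K)%N -> (a < 2 ^ m)%N ->
    (a + 2 ^ m + 2 ^ m.+1 * u1 < 2 ^ K)%N -> (a + 2 ^ m + 2 ^ m.+1 * u2 < 2 ^ K)%N ->
    (a + 2 ^ m.+1 * w < 2 ^ K)%N ->
    ((nth pt0 s (a + 2 ^ m + 2 ^ m.+1 * u1)).1 < (nth pt0 s (a + 2 ^ m + 2 ^ m.+1 * u2)).1)%R ->
    blw (nth pt0 s (a + 2 ^ m + 2 ^ m.+1 * u1)) (nth pt0 s (a + 2 ^ m + 2 ^ m.+1 * u2))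
        (nth pt0 s (a + 2 ^ m.+1 * w)))
  /\
  (forall m a u1 u2 w, (m < K)%N -> (a < 2 ^ m)%N ->
    (a + 2 ^ m.+1 * u1 < 2 ^ K)%N -> (a + 2 ^ m.+1 * u2 < 2 ^ K)%N ->
    (a + 2 ^ m + 2 ^ m.+1 * w < 2 ^ K)%N ->
    ((nth pt0 s (a + 2 ^ m.+1 * u1)).1 < (nth pt0 s (a + 2 ^ m.+1 * u2)).1)%R ->
    abv (nth pt0 s (a + 2 ^ m.+1 * u1)) (nth pt0 s (a + 2 ^ m.+1 * u2))
        (nth pt0 s (a + 2 ^ m + 2 ^ m.+1 * w))).
Proof.
elim: K s => [|K IH] s; first by split => m *; lia.
move=> /and4P [/eqP hs he ho hab].
have [sze szo] := @size_even_odd s (2 ^ K)%N ltac:(by rewrite hs expnS).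
have [IHe1 IHe2] := IH _ he; have [IHo1 IHo2] := IH _ ho.
move/andP: hab => [/allP hab1 /allP hab2].
split=> [[|m]|[|m]] a u1 u2 w hm ha h1 h2 h3.
- have a0 : a = 0%N by move: ha; rewrite expn0; lia.
  subst a; rewrite ?expn1 ?expn0 ?add0n in h1 h2 h3 *.
  have e1 : forall u, nth pt0 s (1 + 2 * u)%N = nth pt0 (odds s) u
    by move=> u; rewrite (proj2 (nth_eo _ _)) add1n.
  rewrite !e1 -(proj1 (nth_eo _ _)) => hx.
  have m1 : nth pt0 (odds s) u1 \in odds s by apply: mem_nth; rewrite szo; move: h1; rewrite expnS; lia.
  have m2 : nth pt0 (odds s) u2 \in odds s by apply: mem_nth; rewrite szo; move: h2; rewrite expnS; lia.
  have m3 : nth pt0 (evens s) w \in evens s by apply: mem_nth; rewrite sze; move: h3; rewrite expnS; lia.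
  have := hab1 _ m1 => /allP /(_ _ m2) /implyP /(_ hx) /allP /(_ _ m3).
  by rewrite line_gt.
- have [a' ea] : exists a', a = (2 * a')%N \/ a = (2 * a').+1.
    exists a./2; have h := odd_double_half a; rewrite -mul2n in h; case: (odd a) h => /= h; [right|left]; lia.
  have ha' : (a' < 2 ^ m)%N by move: ha; rewrite expnS; lia.
  case: ea => ea; subst a.
  + have E1 : forall u, (2 * a' + 2 ^ m.+1 + 2 ^ m.+2 * u = 2 * (a' + 2 ^ m + 2 ^ m.+1 * u))%N
      by move=> u; rewrite !expnS; lia.
    have -> : (2 * a' + 2 ^ m.+2 * w = 2 * (a' + 2 ^ m.+1 * w))%N by rewrite !expnS; lia.
    rewrite ?E1 -!(proj1 (nth_eo _ _)); apply: IHe1 => //; move: h1 h2 h3; rewrite !expnS; lia.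
  + have E2 : forall u, ((2 * a').+1 + 2 ^ m.+1 + 2 ^ m.+2 * u = (2 * (a' + 2 ^ m + 2 ^ m.+1 * u)).+1)%N
      by move=> u; rewrite !expnS; lia.
    have -> : ((2 * a').+1 + 2 ^ m.+2 * w = (2 * (a' + 2 ^ m.+1 * w)).+1)%N by rewrite !expnS; lia.
    rewrite ?E2 -!(proj2 (nth_eo _ _)); apply: IHo1 => //; move: h1 h2 h3; rewrite !expnS; lia.
- have a0 : a = 0%N by move: ha; rewrite expn0; lia.
  subst a; rewrite ?expn1 ?expn0 ?add0n in h1 h2 h3 *.
  have e1 : forall u, nth pt0 s (1 + 2 * u)%N = nth pt0 (odds s) u
    by move=> u; rewrite (proj2 (nth_eo _ _)) add1n.
  rewrite !e1 -!(proj1 (nth_eo _ _)) => hx.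
  have m1 : nth pt0 (evens s) u1 \in evens s by apply: mem_nth; rewrite sze; move: h1; rewrite expnS; lia.
  have m2 : nth pt0 (evens s) u2 \in evens s by apply: mem_nth; rewrite sze; move: h2; rewrite expnS; lia.
  have m3 : nth pt0 (odds s) w \in odds s by apply: mem_nth; rewrite szo; move: h3; rewrite expnS; lia.
  have := hab2 _ m1 => /allP /(_ _ m2) /implyP /(_ hx) /allP /(_ _ m3).
  by rewrite line_lt.
- have [a' ea] : exists a', a = (2 * a')%N \/ a = (2 * a').+1.
    exists a./2; have h := odd_double_half a; rewrite -mul2n in h; case: (odd a) h => /= h; [right|left]; lia.
  have ha' : (a' < 2 ^ m)%N by move: ha; rewrite expnS; lia.
  case: ea => ea; subst a.
  + have E3 : forall u, (2 * a' + 2 ^ m.+1 + 2 ^ m.+2 * u = 2 * (a' + 2 ^ m + 2 ^ m.+1 * u))%N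
      by move=> u; rewrite !expnS; lia.
    have E4 : forall u, (2 * a' + 2 ^ m.+2 * u = 2 * (a' + 2 ^ m.+1 * u))%N
      by move=> u; rewrite !expnS; lia.
    rewrite ?E3 ?E4 -!(proj1 (nth_eo _ _)); apply: IHe2 => //; move: h1 h2 h3; rewrite !expnS; lia.
  + have E5 : forall u, ((2 * a').+1 + 2 ^ m.+1 + 2 ^ m.+2 * u = (2 * (a' + 2 ^ m + 2 ^ m.+1 * u)).+1)%N
      by move=> u; rewrite !expnS; lia.
    have E6 : forall u, ((2 * a').+1 + 2 ^ m.+2 * u = (2 * (a' + 2 ^ m.+1 * u)).+1)%N
      by move=> u; rewrite !expnS; lia.
    rewrite ?E5 ?E6 -!(proj2 (nth_eo _ _)); apply: IHo2 => //; move: h1 h2 h3; rewrite !expnS; lia.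
Qed.
Local Open Scope ring_scope.
Lemma xlt_nth (P : seq pt) p q : sorted (fun a b : pt => a.1 < b.1) P ->
  (p < q)%N -> (q < size P)%N -> (nth pt0 P p).1 < (nth pt0 P q).1.
Proof.
move=> hs hpq hq.
have tr : transitive (fun a b : pt => a.1 < b.1) by move=> y x z; apply: lt_trans.
apply: (sorted_ltn_nth tr pt0 hs) => //; rewrite inE //; lia.
Qed.

Lemma xle_nth (F : realFieldType) (P : seq pt) p q : sorted (fun a b : pt => a.1 < b.1) P ->
  (p <= q)%N -> (q < size P)%N -> ((nth pt0 P p).1%:~R : F) <= (nth pt0 P q).1%:~R.
Proof.
move=> hs hpq hq; rewrite ler_int; case: (ltngtP p q) hpq => // [h _|-> _ //].
by apply/ltW/xlt_nth.
Qed.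

Lemma OL K (P : seq pt) (F : realFieldType) : sorted (fun a b : pt => a.1 < b.1) P ->
  horton_rec K P -> size P = (2 ^ K)%N ->
  forall m a p1 p2 z, (m < K)%N -> (a < 2 ^ m)%N -> (p1 < p2)%N -> (p2 < 2 ^ K)%N -> (z < 2 ^ K)%N ->
  (exists u, p1 = a + 2 ^ m + 2 * 2 ^ m * u)%N -> (exists u, p2 = a + 2 ^ m + 2 * 2 ^ m * u)%N ->
  (exists w, z = a + 2 * 2 ^ m * w)%N ->
  ((nth pt0 P z).2%:~R : F) < line_at (nth pt0 P p1) (nth pt0 P p2) (nth pt0 P z).1%:~R.
Proof.
move=> hs hh hsz m a p1 p2 z hm ha h12 h2 hz [u1 e1] [u2 e2] [w e3].
have hx : (nth pt0 P p1).1 < (nth pt0 P p2).1 by apply: xlt_nth => //; rewrite hsz.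
rewrite line_gt //; subst; rewrite -!expnS in hx *.
apply: (proj1 (@hcls K P hh)) => //; rewrite ?expnS; lia.
Qed.

Lemma EL K (P : seq pt) (F : realFieldType) : sorted (fun a b : pt => a.1 < b.1) P ->
  horton_rec K P -> size P = (2 ^ K)%N ->
  forall m a p1 p2 z, (m < K)%N -> (a < 2 ^ m)%N -> (p1 < p2)%N -> (p2 < 2 ^ K)%N -> (z < 2 ^ K)%N ->
  (exists u, p1 = a + 2 * 2 ^ m * u)%N -> (exists u, p2 = a + 2 * 2 ^ m * u)%N ->
  (exists w, z = a + 2 ^ m + 2 * 2 ^ m * w)%N ->
  line_at (nth pt0 P p1) (nth pt0 P p2) ((nth pt0 P z).1%:~R : F) < (nth pt0 P z).2%:~R.
Proof.
move=> hs hh hsz m a p1 p2 z hm ha h12 h2 hz [u1 e1] [u2 e2] [w e3].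
have hx : (nth pt0 P p1).1 < (nth pt0 P p2).1 by apply: xlt_nth => //; rewrite hsz.
rewrite line_lt //; subst; rewrite -!expnS in hx *.
apply: (proj2 (@hcls K P hh)) => //; rewrite ?expnS; lia.
Qed.

Lemma interp (F : realFieldType) (D : F -> F) beta xa xb x :
  (forall x y, D x - D y = beta * (x - y)) -> 0 < D xa -> 0 < D xb -> xa <= x -> x <= xb -> 0 < D x.
Proof.
move=> hD ha hb h1 h2; case: (lerP 0 beta) => hbe.
  have := hD x xa; have : 0 <= beta * (x - xa) by rewrite mulr_ge0 // subr_ge0.
  lra.
have := hD x xb; have : 0 <= beta * (x - xb) by apply: mulr_le0; [apply: ltW | rewrite subr_le0].
lra.
Qed.
Ltac ar := repeat match goal with H : context[(2 ^ S _)%N] |- _ => rewrite expnS in H end; rewrite ?expnS; lia.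

Theorem lemma1 (k : nat) (P : seq pt) :
  (2 <= k)%N -> isothetic_horton k P ->
  let T1 := tree_level k.-1 P in
  (forall (F : realFieldType) (i j : nat), (i < size T1)%N -> (j < size T1)%N ->
     i != j -> forall x : F, in_slab k P x ->
     pair_line (nth [::] T1 i) x != pair_line (nth [::] T1 j) x)
  /\
  (forall (F : realFieldType) (i j : nat), (i < j)%N -> (j < size T1)%N ->
     forall x : F, in_slab k P x ->
     pair_line (nth [::] T1 i) x < pair_line (nth [::] T1 j) x).
Proof.
case: k => [|[|K]] // _ /and3P [hsort _ hh] T1; rewrite /T1 [K.+2.-1]/=; clear T1.
have hsz : size P = (2 ^ K.+2)%N by move: hh => /= /and4P [/eqP -> _ _ _].
have [szT chT] := @tl_char K.+1 P hsz.
rewrite szT.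
have main : forall (F : realFieldType) (i j : nat), (i < j)%N -> (j < 2 ^ K.+1)%N ->
     forall x : F, in_slab K.+2 P x ->
     pair_line (nth [::] (tree_level K.+1 P) i) x < pair_line (nth [::] (tree_level K.+1 P) j) x.
  move=> F i j hij hj x hx.
  have hi : (i < 2 ^ K.+1)%N by lia.
  have [hr ->] := chT i hi; have [hs ->] := chT j hj.
  have pl : forall A B (y : F), pair_line [:: A; B] y = line_at A B y by [].
  rewrite !pl.
  have [m [a [u [u' [hm ha er es]]]]] := rho_ord K.+1 i j hij hj.
  move: (rho K.+1 i) (rho K.+1 j) hr hs er es => r s hr hs er es.
  have hEF : (2 ^ K = 2 ^ m * 2 ^ (K - m))%N by rewrite -expnD subnKC // -ltnS.

  have hszK : size P = (4 * 2 ^ K)%N by rewrite hsz !expnS; lia.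
  pose y z : F := (nth pt0 P z).2%:~R.
  pose X z : F := (nth pt0 P z).1%:~R.
  pose L1 := line_at (nth pt0 P r) (nth pt0 P (r + 2 ^ K.+1)) : F -> F.
  pose L2 := line_at (nth pt0 P s) (nth pt0 P (s + 2 ^ K.+1)) : F -> F.
  pose D t := L2 t - L1 t.
  have hD : forall t1 t2, D t1 - D t2 = (((nth pt0 P (s + 2 ^ K.+1)).2 - (nth pt0 P s).2)%:~R /
      ((nth pt0 P (s + 2 ^ K.+1)).1 - (nth pt0 P s).1)%:~R -
      ((nth pt0 P (r + 2 ^ K.+1)).2 - (nth pt0 P r).2)%:~R /
      ((nth pt0 P (r + 2 ^ K.+1)).1 - (nth pt0 P r).1)%:~R) * (t1 - t2).
    by move=> t1 t2; rewrite /D /L1 /L2 /line_at; ring.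
  have good : forall z, (L1 (X z) <= y z /\ y z < L2 (X z)) \/ (L1 (X z) < y z /\ y z <= L2 (X z)) ->
      0 < D (X z).
    move=> z [[h1 h2]|[h1 h2]]; rewrite subr_gt0; [exact: le_lt_trans h1 h2 | exact: lt_le_trans h1 h2].
  have OLP := @OL K.+2 P F hsort hh hsz.
  have ELP := @EL K.+2 P F hsort hh hsz.
  have xr : (nth pt0 P r).1 < (nth pt0 P (r + 2 ^ K.+1)).1 by apply: xlt_nth; ar.
  have xs : (nth pt0 P s).1 < (nth pt0 P (s + 2 ^ K.+1)).1 by apply: xlt_nth; ar.
  have G1 : 0 < D (X r).
    apply: good; left; split; first by rewrite /L1 /X /y line_through1.
    apply: (OLP m a) => //; try ar.
    - by exists u'; ar.
    - by exists (u' + 2 ^ (K - m))%N; ar.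
    - by exists u; ar.
  have G2 : 0 < D (X (r + 2 ^ K.+1)%N).
    apply: good; left; split; first by rewrite /L1 /X /y line_through2.
    apply: (OLP m a) => //; try ar.
    - by exists u'; ar.
    - by exists (u' + 2 ^ (K - m))%N; ar.
    - by exists (u + 2 ^ (K - m))%N; ar.
  have G3 : 0 < D (X s).
    apply: good; right; split; last by rewrite /L2 /X /y line_through1.
    apply: (ELP m a) => //; try ar.
    - by exists u; ar.
    - by exists (u + 2 ^ (K - m))%N; ar.
    - by exists u'; ar.
  have G4 : 0 < D (X (s + 2 ^ K.+1)%N).
    apply: good; right; split; last by rewrite /L2 /X /y line_through2.
    apply: (ELP m a) => //; try ar.
    - by exists u; ar.
    - by exists (u + 2 ^ (K - m))%N; ar.
    - by exists (u' + 2 ^ (K - m))%N; ar.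
  have [lo [hlo1 hlo2 hlo3]] : exists lo, [/\ (lo <= 2 ^ K)%N, (lo < size P)%N & 0 < D (X lo)].
    case: (leqP r (2 ^ K)) => hr1; first by exists r; split => //; ar.
    case: (leqP s (2 ^ K)) => hs1; first by exists s; split => //; ar.
    have hmK : (m < K)%N.
      case: (ltngtP m K) => // hmK; [lia | subst m; rewrite subnn expn0 muln1 in hEF].
      by case: u er => [|u] er; ar.
    have hG : (2 ^ (K - m) = 2 * 2 ^ (K - m).-1)%N by rewrite -expnS prednK // subn_gt0.
    have h1 : (2 * 2 ^ m * 2 ^ (K - m).-1 < 2 * 2 ^ m * u'.+1)%N by ar.
    rewrite ltn_pmul2l ?muln_gt0 ?expn_gt0 // ltnS in h1.
    have [v ev] : exists v, u' = (v + 2 ^ (K - m).-1)%N by exists (u' - 2 ^ (K - m).-1)%N; lia.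
    subst u'.
    exists (s - 2 ^ K)%N; split; try ar.
    apply: good; right; split.
      apply: (ELP m a) => //; try ar.
      - by exists u; ar.
      - by exists (u + 2 ^ (K - m))%N; ar.
      - by exists v; ar.
    apply/ltW; apply: (OLP K (s - 2 ^ K)%N) => //; try ar.
    - by exists 0%N; ar.
    - by exists 1%N; ar.
    - by exists 0%N; ar.
  have [hb [hhi1 hhi2 hhi3]] : exists hb, [/\ (3 * 2 ^ K - 1 <= hb)%N, (hb < size P)%N & 0 < D (X hb)].
    case: (leqP (2 ^ K - 1) r) => hr1; first by exists (r + 2 ^ K.+1)%N; split => //; ar.
    case: (leqP (2 ^ K - 1) s) => hs1; first by exists (s + 2 ^ K.+1)%N; split => //; ar.
    have hmK : (m < K)%N.
      case: (ltngtP m K) => // hmK; [lia | subst m; rewrite subnn expn0 muln1 in hEF; ar].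
    have hG : (2 ^ (K - m) = 2 * 2 ^ (K - m).-1)%N by rewrite -expnS prednK // subn_gt0.
    exists (r + 3 * 2 ^ K)%N; split; try ar.
    apply: good; right; split.
      apply: (ELP K r) => //; try ar.
      - by exists 0%N; ar.
      - by exists 1%N; ar.
      - by exists 1%N; ar.
    apply/ltW; apply: (OLP m a) => //; try ar.
    - by exists u'; ar.
    - by exists (u' + 2 ^ (K - m))%N; ar.
    - by exists (u + 3 * 2 ^ (K - m).-1)%N; ar.
  suff : 0 < D x by rewrite subr_gt0.
  apply: (@interp F D _ _ _ x hD hlo3 hhi3).
  - move: hx => /andP [hx1 _]; apply: le_trans hx1.
    have -> : (2 ^ K.+2 %/ 4 = 2 ^ K)%N by rewrite !expnS mulnA mulKn.
    by apply: xle_nth => //; ar.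
  - move: hx => /andP [_ hx2]; apply: (le_trans hx2).
    have -> : ((3 * 2 ^ K.+2) %/ 4 = 3 * 2 ^ K)%N by rewrite (_ : 3 * 2 ^ K.+2 = 4 * (3 * 2 ^ K))%N ?mulKn // !expnS; lia.
    by apply: xle_nth.
split; last exact: main.
move=> F i j hi hj hij x hx.
case: (ltngtP i j) hij => // h _.
  by rewrite lt_eqF // main.
by rewrite gt_eqF // main.
Qed.
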